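(* Let $p$ be a binary word of length $l$ with $r$ runs, of which $r_1$ have size $1$. For every $n\ge0$, $$B_{n,p}(2)=\begin{cases} r_1\binom{n-r}{l-r+1} & \text{if } l\ge 2,\\[2pt] \binom{n}{2} & \text{if } l=1.\end{cases}$$
   Context: $c_p(w)$ is the number of occurrences of $p$ as a (not necessarily consecutive) subsequence of the binary word $w$; $B_{n,p}(k)$ is the number of binary words $w$ of length $n$ with $c_p(w)=k$. A run is a maximal block of consecutive equal letters; its size is its length; $r_i$ denotes the number of runs of $p$ of size $i$. Convention: $\binom{a}{b}=0$ unless $0\le b\le a$. *)

(* Defs.v *)
From mathcomp Require Import all_boot.
Set Implicit Arguments. Unset Strict Implicit. Unset Printing Implicit Defensive.

(* c_p(w): number of occurrences of p as a (not necessarily consecutive)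
   subsequence of w, i.e. number of selections of positions (masks) of w
   whose selected letters spell p. *)
Definition occ (p w : seq bool) : nat :=
  #|[set m : (size w).-tuple bool | mask m w == p]|.

Definition Bnp (n : nat) (p : seq bool) (k : nat) : nat :=
  #|[set w : n.-tuple bool | occ p w == k]|.

(* Run-length decomposition: the sizes of the maximal blocks of equal
   consecutive letters, in order. *)
Fixpoint run_sizes (w : seq bool) : seq nat :=
  match w with
  | [::] => [::]
  | a :: w' =>
      let rs := run_sizes w' in
      match w', rs with
      | b :: _, k :: ks => if a == b then k.+1 :: ks else 1 :: rs
      | _, _ => [:: 1]
      end
  end.

Definition nruns (p : seq bool) : nat := size (run_sizes p).
Definition runs_of_size (p : seq bool) (i : nat) : nat :=
  count (pred1 i) (run_sizes p).

Lemma run_sizes_test : run_sizes [:: true; true; false; true; true; true] = [:: 2; 1; 3].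
Proof. by []. Qed.

(* Main.v *)
Require Import Defs.
From mathcomp Require Import all_boot.
From mathcomp Require Import zify.

Set Implicit Arguments. Unset Strict Implicit. Unset Printing Implicit Defensive.

Fixpoint occr (p w : seq bool) : nat :=
  match w with
  | [::] => if p is [::] then 1 else 0
  | c :: w' => occr p w' + (if p is a :: q then (a == c) * occr q w' else 0)
  end.

Fixpoint cnt (n : nat) (P : seq bool -> bool) : nat :=
  match n with
  | 0 => P [::]
  | n'.+1 => cnt n' (fun w => P (true :: w)) + cnt n' (fun w => P (false :: w))
  end.

Lemma cnt_ext n P Q : (forall w, P w = Q w) -> cnt n P = cnt n Q.
Proof.
elim: n P Q => [|n IH] P Q H /=; first by rewrite H.
by congr (_ + _); apply: IH => w; apply: H.
Qed.

Lemma cnt0 n : cnt n (fun _ => false) = 0.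
Proof. by elim: n => //= n ->. Qed.

Lemma cnt_or n P Q : (forall w, ~~ (P w && Q w)) ->
  cnt n (fun w => P w || Q w) = cnt n P + cnt n Q.
Proof.
elim: n P Q => [|n IH] P Q H /=.
  by move: (H [::]); case: (P [::]); case: (Q [::]).
rewrite IH // IH //; lia.
Qed.

Lemma cnt_split n P a : cnt n.+1 P =
  cnt n (fun w => P (a :: w)) + cnt n (fun w => P (~~ a :: w)).
Proof. by case: a => //=; rewrite addnC. Qed.

Lemma sum_tupleS n (F : n.+1.-tuple bool -> nat) :
  \sum_(t : n.+1.-tuple bool) F t =
  \sum_(t : n.-tuple bool) F [tuple of true :: t] +
  \sum_(t : n.-tuple bool) F [tuple of false :: t].
Proof.
rewrite (reindex (fun x : bool * n.-tuple bool => [tuple of x.1 :: x.2])) /=.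
  by rewrite -(pair_bigA _ (fun (x : bool) (t : n.-tuple bool) => F [tuple of x :: t])) /= big_bool.
apply: onW_bij.
exists (fun t => (thead t, [tuple of behead t])).
  case=> x t /=; congr (_, _).
  by apply: val_inj.
by move=> t /=; rewrite -tuple_eta.
Qed.

Lemma cnt_tuple n (P : seq bool -> bool) :
  #|[set t : n.-tuple bool | P t]| = cnt n P.
Proof.
have E : forall m (Q : seq bool -> bool), #|[set t : m.-tuple bool | Q t]| =
    \sum_(t : m.-tuple bool) Q t.
  move=> m Q; rewrite -sum1_card big_mkcond /=.
  by apply: eq_bigr => t _; rewrite inE; case: (Q t).
rewrite E.
elim: n P => [|n IH] P.
  by rewrite (big_pred1 [tuple]) // => t; apply/esym/eqP; exact: tuple0.
rewrite sum_tupleS /= (IH (fun w => P (true :: w))) (IH (fun w => P (false :: w))).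
done.
Qed.

Lemma cnt_mask w p : cnt (size w) (fun m => mask m w == p) = occr p w.
Proof.
elim: w p => [|c w IH] p /=; first by case: p.
rewrite IH addnC; congr (_ + _).
case: p => [|a q]; first by rewrite (cnt_ext _ (Q := fun _ => false)) ?cnt0.
rewrite (cnt_ext _ (Q := fun m => (c == a) && (mask m w == q))); last first.
  by move=> m; rewrite eqseq_cons.
case: (eqVneq c a) => [E|ne]; first by rewrite /= mul1n -IH.
by rewrite mul0n (cnt_ext _ (Q := fun _ => false)) ?cnt0.
Qed.

Lemma occ_occr p w : occ p w = occr p w.
Proof. by rewrite /occ (cnt_tuple (size w) (fun m => mask m w == p)) cnt_mask. Qed.

Lemma occr_nil w : occr [::] w = 1.
Proof. by elim: w => //= c w ->. Qed.

Lemma occr_mono q c w : occr q w <= occr q (c :: w).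
Proof. by case: q => [|a q] /=; rewrite ?addn0 ?leq_addr. Qed.

Lemma occr_pos a q w : occr q w = 0 -> occr (a :: q) w = 0.
Proof.
elim: w => [//|c w IH] H.
have H0 : occr q w = 0 by move: (occr_mono q c w); rewrite H; lia.
by rewrite /= IH // H0 muln0.
Qed.

Lemma neqb a : (a == ~~ a) = false.
Proof. by case: a. Qed.

Lemma neqb' a : (~~ a == a) = false.
Proof. by case: a. Qed.

Definition Zc n p := cnt n (fun w => (occr p w == 0) && (occr (behead p) w == 1)).
Definition Xc n p := cnt n (fun w => (occr p w == 0) && (occr (behead p) w == 2)).
Definition Yc n p := cnt n (fun w => (occr p w == 1) && (occr (behead p) w == 1)).
Definition Wc n p := cnt n (fun w => [&& occr p w == 0, occr (behead p) w == 1
                                     & occr (behead (behead p)) w == 1]).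
Definition N2 n p := cnt n (fun w => occr p w == 2).

Ltac pos_facts w :=
  repeat match goal with
  | |- context [occr (?a :: ?q) w] =>
      lazymatch goal with
      | _ : occr q w = 0 -> occr (a :: q) w = 0 |- _ => fail
      | _ => have := @occr_pos a q w; move=> ?
      end
  end.

Ltac bsolve w := pos_facts w; rewrite ?occr_nil;
  first [apply/negbTE/negP => ?; lia | apply/idP/idP => ?; lia].

Lemma A0 n a : cnt n (fun w => occr [:: a] w == 0) = 1.
Proof.
elim: n => [|n IH] //; rewrite (cnt_split _ _ a) -[RHS]add0n; congr (_ + _).
  rewrite (cnt_ext _ (Q := fun _ => false)) ?cnt0 // => w /=.
  rewrite eqxx occr_nil; lia.
rewrite -[RHS]IH; apply: cnt_ext => w /=; rewrite neqb; lia.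
Qed.

Lemma Z_nil n a : Zc n [:: a] = 1.
Proof. rewrite /Zc -[RHS](A0 n a); apply: cnt_ext => w /=; by rewrite occr_nil andbT. Qed.

Lemma Z_same n a q : Zc n.+1 (a :: a :: q) = Zc n (a :: a :: q) + Zc n (a :: q).
Proof.
rewrite /Zc (cnt_split _ _ a) addnC; congr (_ + _); apply: cnt_ext => w /=;
  rewrite ?eqxx ?neqb ?neqb' ?mul1n ?mul0n ?addn0; bsolve w.
Qed.

Lemma Z_diff n a q : Zc n.+1 (a :: ~~ a :: q) = Zc n (~~ a :: q).
Proof.
rewrite /Zc (cnt_split _ _ a) -[RHS]add0n; congr (_ + _).
  rewrite -[RHS](cnt0 n); apply: cnt_ext => w /=.
  rewrite ?eqxx ?neqb ?neqb' ?mul1n ?mul0n ?addn0; bsolve w.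
apply: cnt_ext => w /=; rewrite ?negbK ?eqxx ?neqb ?neqb' ?mul1n ?mul0n ?addn0; bsolve w.
Qed.

Lemma Y_nil n a : Yc n [:: a] = n.
Proof.
elim: n => [|n IH] //; rewrite [LHS](cnt_split _ _ a).
transitivity (cnt n (fun w => occr [::a] w == 0) + Yc n [::a]); last by rewrite A0 IH.
congr (_ + _); apply: cnt_ext => w /=; rewrite ?eqxx ?neqb ?mul1n ?mul0n ?addn0; bsolve w.
Qed.

Lemma Y_same n a q : Yc n.+1 (a :: a :: q) = Yc n (a :: a :: q).
Proof.
rewrite /Yc (cnt_split _ _ a) -[RHS]add0n; congr (_ + _).
  rewrite -[RHS](cnt0 n); apply: cnt_ext => w /=.
  rewrite ?eqxx ?neqb ?neqb' ?mul1n ?mul0n ?addn0; bsolve w.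
apply: cnt_ext => w /=; rewrite ?negbK ?eqxx ?neqb ?neqb' ?mul1n ?mul0n ?addn0; bsolve w.
Qed.

Lemma Y_diff n a q : Yc n.+1 (a :: ~~ a :: q) = Zc n (a :: ~~ a :: q).
Proof.
rewrite /Yc /Zc (cnt_split _ _ a) -[RHS]addn0; congr (_ + _).
  apply: cnt_ext => w /=; rewrite ?eqxx ?neqb ?neqb' ?mul1n ?mul0n ?addn0; bsolve w.
rewrite -[RHS](cnt0 n); apply: cnt_ext => w /=.
rewrite ?negbK ?eqxx ?neqb ?neqb' ?mul1n ?mul0n ?addn0; bsolve w.
Qed.

Ltac simp := rewrite ?negbK ?eqxx ?neqb ?neqb' ?mul1n ?mul0n ?addn0.

Lemma W_nil2 n a : Wc n.+1 [:: a; ~~ a] = 1.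
Proof.
rewrite /Wc (cnt_split _ _ a) -[RHS](A0 n (~~ a)) -[RHS]add0n; congr (_ + _).
  rewrite -[RHS](cnt0 n); apply: cnt_ext => w /=; simp; bsolve w.
apply: cnt_ext => w /=; simp; bsolve w.
Qed.

Lemma W_a n a q : Wc n.+1 (a :: ~~ a :: a :: q) = Zc n (~~ a :: a :: q).
Proof.
rewrite /Wc /Zc (cnt_split _ _ a) -[RHS]add0n; congr (_ + _).
  rewrite -[RHS](cnt0 n); apply: cnt_ext => w /=; simp; bsolve w.
apply: cnt_ext => w /=; simp; bsolve w.
Qed.

Lemma W_b n a q : Wc n.+1 (a :: ~~ a :: ~~ a :: q) = 0.
Proof.
rewrite /Wc (cnt_split _ _ a) !(cnt_ext _ (Q := fun _ => false)) ?cnt0 // => w /=;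
  simp; bsolve w.
Qed.

Lemma X_nil n a : Xc n [:: a] = 0.
Proof. rewrite /Xc -[RHS](cnt0 n); apply: cnt_ext => w /=; by rewrite occr_nil andbF. Qed.

Lemma X_same n a q : Xc n.+1 (a :: a :: q) = Xc n (a :: a :: q) + Xc n (a :: q).
Proof.
rewrite /Xc (cnt_split _ _ a) addnC; congr (_ + _); apply: cnt_ext => w /=;
  simp; bsolve w.
Qed.

Lemma X_diff n a q : Xc n.+1 (a :: ~~ a :: q) = Xc n (~~ a :: q) + Wc n (a :: ~~ a :: q).
Proof.
rewrite /Xc /Wc (cnt_split _ _ a) -[RHS]add0n; congr (_ + _).
  rewrite -[RHS](cnt0 n); apply: cnt_ext => w /=; simp; bsolve w.
rewrite -cnt_or.
  apply: cnt_ext => w /=; simp; bsolve w.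
move=> w /=; pos_facts w; rewrite ?occr_nil; apply/negP => ?; lia.
Qed.

Lemma N2_step n a q : N2 n.+1 (a :: q) = N2 n (a :: q) + (Xc n (a :: q) + Yc n (a :: q)).
Proof.
rewrite /N2 /Xc /Yc (cnt_split _ _ a) addnC; congr (_ + _).
  apply: cnt_ext => w /=; simp; bsolve w.
rewrite -cnt_or.
  apply: cnt_ext => w /=; simp; bsolve w.
move=> w /=; pos_facts w; rewrite ?occr_nil; apply/negP => ?; lia.
Qed.

Lemma rs_unfold a d q : run_sizes (a :: d :: q) =
  match d :: q, run_sizes (d :: q) with
  | b :: _, k :: ks => if a == b then k.+1 :: ks else 1 :: run_sizes (d :: q)
  | _, _ => [:: 1]
  end.
Proof. by []. Qed.

Lemma rs_ne a q : exists k ks, run_sizes (a :: q) = k.+1 :: ks.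
Proof.
case: q => [|d q]; first by exists 0, [::].
rewrite rs_unfold; case: (run_sizes (d :: q)) => [|k ks]; first by exists 0, [::].
by case: (a == d); do 2 eexists.
Qed.

Lemma rs_cons a d q : run_sizes (a :: d :: q) =
  if a == d then (head 0 (run_sizes (d :: q))).+1 :: behead (run_sizes (d :: q))
  else 1 :: run_sizes (d :: q).
Proof.
have [k [ks E]] := rs_ne d q.
by rewrite rs_unfold E.
Qed.

Lemma bool_cases (d a : bool) : d = a \/ d = ~~ a.
Proof. by case: d; case: a; auto. Qed.

Lemma nruns_cons a d q : nruns (a :: d :: q) = (a != d) + nruns (d :: q).
Proof.
rewrite /nruns rs_cons; have [k [ks E]] := rs_ne d q.
by rewrite E; case: (a == d).
Qed.

Lemma nruns_same a q : nruns (a :: a :: q) = nruns (a :: q).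
Proof. by rewrite nruns_cons eqxx. Qed.

Lemma nruns_diff a q : nruns (a :: ~~ a :: q) = (nruns (~~ a :: q)).+1.
Proof. by rewrite nruns_cons; case: a. Qed.

Lemma nruns_pos a q : 0 < nruns (a :: q).
Proof. by have [k [ks E]] := rs_ne a q; rewrite /nruns E. Qed.

Lemma nruns_le p : nruns p <= size p.
Proof.
elim: p => [|a q IH] //; case: q IH => [|d q] IH //.
rewrite nruns_cons /=; move: IH => /=; case: (a != d) => /=; lia.
Qed.

Definition sc p := count (pred1 1) (behead (run_sizes p)).

Lemma sc_same a q : sc (a :: a :: q) = sc (a :: q).
Proof.
rewrite /sc rs_cons eqxx; have [k [ks E]] := rs_ne a q.
by rewrite E.
Qed.

Lemma sc_diff a q : sc (a :: ~~ a :: q) = count (pred1 1) (run_sizes (~~ a :: q)).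
Proof. by rewrite /sc rs_cons neqb. Qed.

Lemma count_rs a q : count (pred1 1) (run_sizes (a :: q)) =
  (head 0 (run_sizes (a :: q)) == 1) + sc (a :: q).
Proof. by rewrite /sc; have [k [ks E]] := rs_ne a q; rewrite E. Qed.

Lemma head_same a q : head 0 (run_sizes (a :: a :: q)) == 1 = false.
Proof.
rewrite rs_cons eqxx; have [k [ks E]] := rs_ne a q.
by rewrite E.
Qed.

Lemma head_diff a q : head 0 (run_sizes (a :: ~~ a :: q)) = 1.
Proof. by rewrite rs_cons neqb. Qed.

Definition D m r j := if r <= m then 'C(m - r, j) else 0.

Lemma D_pascal m r j : D m.+1 r j.+1 = D m r j.+1 + D m r j.
Proof.
rewrite /D; case: (leqP r m) => h.
  have -> : r <= m.+1 by lia.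
  by rewrite subSn // binS.
case: (leqP r m.+1) => h2 //.
have -> : m.+1 - r = 0 by lia.
by rewrite bin0n.
Qed.

Lemma D_S m r j : D m.+1 r.+1 j = D m r j.
Proof. by rewrite /D ltnS subSS. Qed.

Lemma D_big m r j : m < r -> D m r j = 0.
Proof. by rewrite /D; case: leqP => //; lia. Qed.

Lemma Z_closed a q n :
  Zc n (a :: q) = D n.+1 (nruns (a :: q)) (size (a :: q) - nruns (a :: q)).
Proof.
elim: q a n => [|d q IH] a n.
  by rewrite Z_nil /D /= bin0.
case: (bool_cases d a) => ->;
  have Hle := nruns_le (_ :: q); have Hpos := nruns_pos _ q.
  rewrite nruns_same.
  elim: n => [|n IHn].
    rewrite /D /=; case: leqP => // _.
    rewrite bin_small; first by [].
    move: (Hle a) (Hpos a) => /=; lia.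
  rewrite Z_same IHn IH /=.
  have -> : (size q).+2 - nruns (a :: q) = ((size q).+1 - nruns (a :: q)).+1.
    by move: (Hle a) => /=; lia.
  by rewrite [RHS]D_pascal.
rewrite nruns_diff.
case: n => [|n].
  by rewrite D_big //; move: (nruns_pos (~~ a) q); lia.
by rewrite Z_diff IH D_S /= subSS.
Qed.

Lemma head_diff' a q : head 0 (run_sizes (~~ a :: a :: q)) = 1.
Proof. by rewrite rs_cons neqb'. Qed.

Lemma W_closed a q n : Wc n (a :: ~~ a :: q) =
  (head 0 (run_sizes (~~ a :: q)) == 1) *
  D n.+1 (nruns (a :: ~~ a :: q)) (size (a :: ~~ a :: q) - nruns (a :: ~~ a :: q)).
Proof.
case: n => [|n].
  rewrite D_big ?muln0 // nruns_diff; move: (nruns_pos (~~ a) q); lia.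
case: q => [|e q].
  by rewrite W_nil2 nruns_diff /= /D /= bin0.
case: (bool_cases e a) => ->.
  rewrite W_a Z_closed head_diff' mul1n nruns_diff D_S.
  by rewrite /= subSS.
by rewrite W_b head_same.
Qed.

Lemma Y_closed a q n : Yc n (a :: ~~ a :: q) =
  D n (nruns (a :: ~~ a :: q)) (size (a :: ~~ a :: q) - nruns (a :: ~~ a :: q)).
Proof.
case: n => [|n].
  by rewrite D_big //; move: (nruns_pos a (~~ a :: q)); lia.
by rewrite Y_diff Z_closed.
Qed.

Lemma Y_same0 a q n : Yc n (a :: a :: q) = 0.
Proof. by elim: n => [|n IH] //; rewrite Y_same. Qed.

Lemma X_closed a q n : Xc n (a :: q) =
  sc (a :: q) * D n (nruns (a :: q)) (size (a :: q) - nruns (a :: q)).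
Proof.
elim: q a n => [|d q IH] a n.
  by rewrite X_nil.
case: (bool_cases d a) => ->.
  have Hle := nruns_le (a :: q).
  rewrite sc_same nruns_same.
  elim: n => [|n IHn].
    by rewrite D_big ?muln0 //; move: (nruns_pos a q); lia.
  rewrite X_same IHn IH /=.
  have -> : (size q).+2 - nruns (a :: q) = ((size q).+1 - nruns (a :: q)).+1.
    by move: Hle => /=; lia.
  by rewrite [D n.+1 _ _]D_pascal mulnDr.
case: n => [|n].
  by rewrite D_big ?muln0 //; move: (nruns_pos a (~~ a :: q)); lia.
rewrite X_diff IH W_closed sc_diff count_rs nruns_diff.
rewrite [D n.+1 _ _]D_S /= subSS mulnDl addnC.
done.
Qed.

Lemma binD n r j : 'C(n.+1 - r, j.+1) = 'C(n - r, j.+1) + D n r j.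
Proof.
rewrite /D; case: leqP => h.
  by rewrite subSn // binS.
have -> : n.+1 - r = 0 by lia.
have -> : n - r = 0 by lia.
by rewrite bin0n.
Qed.

Lemma N2_closed a d q n : N2 n (a :: d :: q) =
  count (pred1 1) (run_sizes (a :: d :: q)) *
  'C(n - nruns (a :: d :: q), size (a :: d :: q) - nruns (a :: d :: q) + 1).
Proof.
elim: n => [|n IHn].
  by rewrite sub0n addn1 bin0n muln0.
rewrite N2_step IHn X_closed count_rs !addn1 binD.
case: (bool_cases d a) => ->.
  rewrite Y_same0 head_same addn0 add0n mulnDr.
  done.
rewrite Y_closed head_diff /= mulnDr mulnDl mul1n.
lia.
Qed.

Lemma N2_single a n : N2 n [:: a] = 'C(n, 2).
Proof.
elim: n => [|n IH] //.
by rewrite N2_step IH X_nil Y_nil binS bin1.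
Qed.

Lemma Bnp_N2 n p k : Bnp n p k = cnt n (fun w => occr p w == k).
Proof.
rewrite /Bnp -(cnt_tuple n (fun w => occr p w == k)).
by apply: eq_card => w; rewrite !inE occ_occr.
Qed.

Theorem mainTheorem3 (p : seq bool) (n : nat) :
  let l := size p in
  let r := nruns p in
  let r1 := runs_of_size p 1 in
  (2 <= l -> Bnp n p 2 = r1 * 'C(n - r, l - r + 1)) /\
  (l = 1 -> Bnp n p 2 = 'C(n, 2)).
Proof.
move=> l r r1; rewrite {}/l {}/r {}/r1 /runs_of_size; split.
  case: p => [|a [|d q]] //= _.
  by rewrite Bnp_N2 -/(N2 n _) N2_closed.
case: p => [|a [|d q]] //= _.
by rewrite Bnp_N2 -/(N2 n _) N2_single.
Qed.
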